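(* Let $K$ be the Choi-Kraus operator space of a quantum channel $\mathcal{N}:\mathcal{L}(A')\to\mathcal{L}(B)$. Then $\kappa^{NS}(K)=\sqrt{\Upsilon(K)}$, so the one-shot NS-codes assisted zero-error quantum capacity of $K$ equals $\lfloor\sqrt{\Upsilon(K)}\rfloor$.
   Context: A quantum channel $\mathcal{N}(\rho)=\sum_j E_j\rho E_j^\dagger$ from $\mathcal{L}(A')$ to $\mathcal{L}(B)$; $A\cong A'$; the Choi matrix is $J_{AB}=\sum_{i,j}|i\rangle\langle j|_A\otimes\mathcal{N}(|i\rangle\langle j|_{A'})$, $K=\mathrm{span}\{E_j\}$, and $P_{AB}$ is the projection onto the support of $J_{AB}$. For $k>0$, $D^{NS}(K,k)$ is the maximum of $\operatorname{tr}P_{AB}(W_{AB}-\rho_A\otimes\mathbb{1}_B)$ over $W_{AB},\rho_A$ subject to $0\le W_{AB}\le\rho_A\otimes\mathbb{1}_B$, $\operatorname{tr}\rho_A=1$, $\operatorname{tr}_AW_{AB}=\frac{1}{k^2}\mathbb{1}_B$; and $\kappa^{NS}(K)=\max\{k\ge0: D^{NS}(K,k)=0\}$. The one-shot NS-assisted zero-error quantum capacity of $K$ is $\lfloor\kappa^{NS}(K)\rfloor$. The quantity $\Upsilon(K)$ (the NS-assisted zero-error classical capacity quantity of $K$) is the optimal value of: maximize $\operatorname{tr}S_A$ over operators $S_A$ on $A$ and $U_{AB}$ on $A\otimes B$ subject to $0\le U_{AB}\le S_A\otimes\mathbb{1}_B$, $\operatorname{tr}_AU_{AB}=\mathbb{1}_B$,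 $\operatorname{tr}P_{AB}(S_A\otimes\mathbb{1}_B-U_{AB})=0$. *)

(* Defs.v *)
From HB Require Import structures.
From mathcomp Require Import all_boot all_order all_algebra.
From mathcomp Require Import complex mxtens.
From mathcomp Require Import boolp classical_sets reals constructive_ereal ereal.
Set Implicit Arguments. Unset Strict Implicit. Unset Printing Implicit Defensive.
Import Order.TTheory GRing.Theory Num.Theory.
Local Open Scope ring_scope.
Local Open Scope classical_set_scope.

Section QDefs.
Variable R : realType.
Local Notation C := R[i].

Definition adjmx {p q : nat} (A : 'M[C]_(p, q)) : 'M[C]_(q, p) :=
  (map_mx (@conjc R) A)^T.

(* positive semidefinite: v^* A v >= 0 for all v (order of R[i]: real and >= 0) *)
Definition psdmx {d : nat} (A : 'M[C]_d) : Prop :=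
  forall v : 'cV[C]_d, 0 <= (adjmx v *m A *m v) 0 0.

Definition lemx {d : nat} (A B : 'M[C]_d) : Prop := psdmx (B - A).

(* partial trace over the first factor A of A (x) B, with the index
   convention of mxtens: (a,b) |-> a * dB + b *)
Definition ptraceA {dA dB : nat} (W : 'M[C]_(dA * dB)) : 'M[C]_dB :=
  \matrix_(j, j') \sum_(a < dA) W (mxtens_index (a, j)) (mxtens_index (a, j')).

Definition kraus_map {n m r : nat} (E : 'I_r -> 'M[C]_(m, n)) (X : 'M[C]_n)
  : 'M[C]_m := \sum_(j < r) (E j *m X *m adjmx (E j)).

(* quantum channel: trace preserving (CP holds by the Kraus form) *)
Definition is_channel {n m r : nat} (E : 'I_r -> 'M[C]_(m, n)) : Prop :=
  \sum_(j < r) (adjmx (E j) *m E j) = 1%:M.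

Definition choi {n m r : nat} (E : 'I_r -> 'M[C]_(m, n)) : 'M[C]_(n * m) :=
  \sum_(i < n) \sum_(j < n) (delta_mx i j *t kraus_map E (delta_mx i j)).

(* P is the (orthogonal) projection onto the support (range) of J *)
Definition support_proj {d : nat} (J P : 'M[C]_d) : Prop :=
  [/\ adjmx P = P, P *m P = P & (P^T == J^T)%MS].

Definition DNS_values {n m : nat} (P : 'M[C]_(n * m)) (k : R) : set R :=
  [set x | exists (W : 'M[C]_(n * m)) (rho : 'M[C]_n),
     [/\ psdmx W, lemx W (rho *t (1%:M : 'M[C]_m)),
         \tr rho = 1,
         ptraceA W = (real_complex R (k ^- 2))%:M
       & \tr (P *m (W - rho *t (1%:M : 'M[C]_m))) = real_complex R x]].

(* D^NS(K,k) = optimal value (max) of the SDP; -oo if infeasible *)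
Definition DNS {n m : nat} (P : 'M[C]_(n * m)) (k : R) : \bar R :=
  ereal_sup [set x%:E | x in DNS_values P k].

(* kappa^NS(K) = max { k > 0 : D^NS(K,k) = 0 } (taken as a supremum) *)
Definition kappaNS {n m : nat} (P : 'M[C]_(n * m)) : \bar R :=
  ereal_sup [set k%:E | k in [set k : R | 0 < k /\ DNS P k = (0%:E)]].

Definition oneshot_NS_Q {n m : nat} (P : 'M[C]_(n * m)) : int :=
  Num.floor (fine (kappaNS P)).

Definition Upsilon_values {n m : nat} (P : 'M[C]_(n * m)) : set R :=
  [set x | exists (S : 'M[C]_n) (U : 'M[C]_(n * m)),
     [/\ psdmx U, lemx U (S *t (1%:M : 'M[C]_m)),
         ptraceA U = 1%:M,
         \tr (P *m (S *t (1%:M : 'M[C]_m) - U)) = 0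
       & \tr S = real_complex R x]].

Definition Upsilon {n m : nat} (P : 'M[C]_(n * m)) : \bar R :=
  ereal_sup [set x%:E | x in Upsilon_values P].

End QDefs.

(* Main.v *)
Require Import Defs.
From HB Require Import structures.
From mathcomp Require Import all_boot all_order all_algebra.
From mathcomp Require Import complex mxtens.
From mathcomp Require Import boolp classical_sets reals constructive_ereal ereal.
From mathcomp Require Import lra ring.
From mathcomp Require Import topology normedtype matrix_normedtype derive.
Import numFieldNormedType.Exports.
Import Order.TTheory GRing.Theory Num.Theory.
Local Open Scope ring_scope.
Local Open Scope complex_scope.
Set Implicit Arguments. Unset Strict Implicit. Unset Printing Implicit Defensive.

Section Q.
Variable R : realType.
Local Notation C := R[i].

Definition cj (x : C) : C := let: a +i* b := x in a +i* (- b).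
Lemma cjE (x : C) : cj x = conjc x. Proof. by []. Qed.
Lemma cjR (x : R) : cj (x%:C) = x%:C. Proof. by rewrite /cj /= oppr0. Qed.
Lemma cjD (x y : C) : cj (x + y) = cj x + cj y. Proof. by rewrite !cjE rmorphD. Qed.
Lemma cjM (x y : C) : cj (x * y) = cj x * cj y. Proof. by rewrite !cjE rmorphM. Qed.
Lemma cjN (x : C) : cj (- x) = - cj x. Proof. by rewrite !cjE rmorphN. Qed.
Lemma cjK (x : C) : cj (cj x) = x. Proof. by rewrite !cjE conjcK. Qed.
Lemma cj0 : cj 0 = 0. Proof. by rewrite cjE rmorph0. Qed.
Lemma cj1 : cj 1 = 1. Proof. by rewrite cjE rmorph1. Qed.
Lemma cji : cj 'i = - 'i. Proof. by rewrite -[- 'i]/(Complex (-0) (-1) : C) oppr0. Qed.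
Lemma cj_sum I (r : seq I) (Pr : pred I) (F : I -> C) : cj (\sum_(i <- r | Pr i) F i) = \sum_(i <- r | Pr i) cj (F i).
Proof. by rewrite cjE rmorph_sum. Qed.
Lemma mul_cj_ge0 (x : C) : 0 <= cj x * x.
Proof. by case: x => a b; rewrite /cj lecE /=; apply/andP; split; [apply/eqP; ring | nra]. Qed.

Lemma adjmxE p q (A : 'M[C]_(p,q)) i j : adjmx A i j = cj (A j i).
Proof. by rewrite !mxE. Qed.

Lemma adjmxD p q (A B : 'M[C]_(p,q)) : adjmx (A + B) = adjmx A + adjmx B.
Proof. by apply/matrixP=> i j; rewrite !mxE rmorphD. Qed.
Lemma adjmxN p q (A : 'M[C]_(p,q)) : adjmx (- A) = - adjmx A.
Proof. by apply/matrixP=> i j; rewrite !mxE rmorphN. Qed.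
Lemma adjmxB p q (A B : 'M[C]_(p,q)) : adjmx (A - B) = adjmx A - adjmx B.
Proof. by rewrite adjmxD adjmxN. Qed.
Lemma adjmxZ p q c (A : 'M[C]_(p,q)) : adjmx (c *: A) = cj c *: adjmx A.
Proof. by apply/matrixP=> i j; rewrite !mxE rmorphM. Qed.
Lemma adjmx_mul p q s (A : 'M[C]_(p,q)) (B : 'M[C]_(q,s)) :
  adjmx (A *m B) = adjmx B *m adjmx A.
Proof. by rewrite /adjmx map_mxM trmx_mul. Qed.
Lemma adjmxK p q (A : 'M[C]_(p,q)) : adjmx (adjmx A) = A.
Proof. by apply/matrixP=> i j; rewrite !mxE conjcK. Qed.
Lemma adjmx_tens p q s t (A : 'M[C]_(p,q)) (B : 'M[C]_(s,t)) :
  adjmx (A *t B) = adjmx A *t adjmx B.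
Proof. by rewrite /adjmx map_mxT trmx_tens. Qed.
Lemma adjmx_delta p q (i : 'I_p) (j : 'I_q) : adjmx (delta_mx i j : 'M[C]_(p,q)) = delta_mx j i.
Proof. by apply/matrixP=> a b; rewrite !mxE rmorph_nat andbC. Qed.
Lemma adjmx1 p : adjmx (1%:M : 'M[C]_p) = 1%:M.
Proof. by apply/matrixP=> a b; rewrite !mxE rmorph_nat eq_sym. Qed.
Lemma adjmx_sum p q I (r : seq I) (Pr : pred I) (F : I -> 'M[C]_(p,q)) :
  adjmx (\sum_(i <- r | Pr i) F i) = \sum_(i <- r | Pr i) adjmx (F i).
Proof. by apply/matrixP=> a b; rewrite !(mxE, summxE) rmorph_sum; apply: eq_bigr => i _; rewrite !mxE. Qed.


Definition bil {d} (A : 'M[C]_d) (u v : 'cV[C]_d) : C := (adjmx u *m A *m v) 0 0.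

Lemma bilDl d (A : 'M[C]_d) u1 u2 v : bil A (u1 + u2) v = bil A u1 v + bil A u2 v.
Proof. by rewrite /bil adjmxD !mulmxDl mxE. Qed.
Lemma bilDr d (A : 'M[C]_d) u v1 v2 : bil A u (v1 + v2) = bil A u v1 + bil A u v2.
Proof. by rewrite /bil !mulmxDr mxE. Qed.
Lemma bilZl d (A : 'M[C]_d) c u v : bil A (c *: u) v = cj c * bil A u v.
Proof. by rewrite /bil adjmxZ -!scalemxAl mxE. Qed.
Lemma bilZr d (A : 'M[C]_d) c u v : bil A u (c *: v) = c * bil A u v.
Proof. by rewrite /bil -!scalemxAr mxE. Qed.
Lemma bil_delta d (A : 'M[C]_d) i j : bil A (delta_mx i 0) (delta_mx j 0) = A i j.
Proof. by rewrite /bil adjmx_delta -rowE -colE !mxE. Qed.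
Lemma bilE d (A : 'M[C]_d) u v : bil A u v = \sum_i \sum_j cj (u i 0) * A i j * v j 0.
Proof.
transitivity (\sum_j \sum_i cj (u i 0) * A i j * v j 0); last by rewrite exchange_big.
rewrite /bil mxE; apply: eq_bigr => j _; rewrite mxE mulr_suml; apply: eq_bigr => i _.
by rewrite !mxE.
Qed.
Lemma bil_col d (A : 'M[C]_d) j v : bil A (delta_mx j 0) v = (A *m v) j 0.
Proof. by rewrite /bil adjmx_delta -rowE -row_mul mxE. Qed.

Lemma ge0_realC (z : C) : 0 <= z -> z = (complex.Re z)%:C.
Proof. by case: z => a b; rewrite lecE /= => /andP[/eqP -> _]. Qed.


Lemma quad_aux (a c : C) : 0 <= c -> (forall t : R, 0 <= t%:C * a + (t ^+ 2)%:C * c) -> a = 0.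
Proof.
case: a => ar ai; case: c => cr ci; rewrite lecE /= => /andP[/eqP ci0 cr0] H.
have h1 := H 1; rewrite lecE /= in h1.
move: h1 => /andP[/eqP h1 _].
have hai : ai = 0 by move: h1; rewrite ci0 expr1n; lra.
pose t := - ar / (cr + 1).
have hd : 0 < cr + 1 by lra.
have ht : t * (cr + 1) = - ar by rewrite /t divfK // gt_eqF.
have := H t; rewrite lecE /= => /andP[_ ht2].
rewrite ci0 in ht2.
have : ar = 0.
  have h3 : 0 <= (t * (cr+1)) * (ar * (cr + 1)) + (t * (cr+1))^+2 * cr.
    by move: ht2; rewrite !mul0r !subr0 => ht2; nra.
  rewrite ht in h3; nra.
by move=> ->; rewrite hai.
Qed.

Lemma psd_zero d (X : 'M[C]_d) v : psdmx X -> bil X v v = 0 -> X *m v = 0.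
Proof.
move=> hX hv.
have key : forall w, bil X w v = 0.
  move=> w.
  have h1 : bil X v w + bil X w v = 0.
    apply: (@quad_aux _ (bil X w w)); first exact: hX.
    move=> t; have := hX (v + t%:C *: w).
    rewrite -/(bil _ _ _) bilDl !bilDr !bilZl !bilZr hv [cj _]cjR.
    have -> : (t ^+ 2)%:C = t%:C * t%:C :> C by rewrite expr2 rmorphM.
    by rewrite add0r; congr (0 <= _); ring.
  have h2 : 'i%C * bil X v w - 'i%C * bil X w v = 0.
    apply: (@quad_aux _ (bil X w w)); first exact: hX.
    move=> t; have := hX (v + (t%:C * 'i%C) *: w).
    rewrite -/(bil _ _ _) bilDl !bilDr !bilZl !bilZr hv add0r cjM [cj _]cjR cji.
    have hi : 'i * 'i = -1 :> C by rewrite -expr2 sqr_i.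
    have -> : (t ^+ 2)%:C = t%:C * t%:C :> C by rewrite expr2 rmorphM.
    have e : forall a b c tt jj : C, tt*jj*a + (tt*(-jj)*b + tt*(-jj)*(tt*jj*c))
       = tt*(jj*a - jj*b) + tt*tt*c + tt*tt*c*(-(jj*jj) - 1) by move=> *; ring.
    by rewrite e hi opprK subrr mulr0 addr0.
  have hi0 : 'i%C != 0 :> C by apply/eqP => /(congr1 (@complex.Im R)) /= /eqP; rewrite oner_eq0.
  have : bil X v w - bil X w v = 0.
    by apply/eqP; rewrite -(mulrI_eq0 _ (mulfI hi0)) mulrBr; apply/eqP.
  move/eqP; rewrite subr_eq0 => /eqP e.
  move: h1; rewrite e -mulr2n => /eqP; rewrite mulrn_eq0 /= => /eqP; done.
apply/matrixP => a b; rewrite [b]ord1 -bil_col key mxE //.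
Qed.


Lemma psdE d (A : 'M[C]_d) : psdmx A <-> forall v, 0 <= bil A v v.
Proof. by []. Qed.

Lemma bil_addA d (A B : 'M[C]_d) u v : bil (A + B) u v = bil A u v + bil B u v.
Proof. by rewrite /bil mulmxDr mulmxDl mxE. Qed.
Lemma bil_oppA d (A : 'M[C]_d) u v : bil (- A) u v = - bil A u v.
Proof. by rewrite /bil mulmxN mulNmx mxE. Qed.
Lemma bil_scaleA d (A : 'M[C]_d) c u v : bil (c *: A) u v = c * bil A u v.
Proof. by rewrite /bil -scalemxAr -scalemxAl mxE. Qed.

Lemma psdD d (A B : 'M[C]_d) : psdmx A -> psdmx B -> psdmx (A + B).
Proof. by move=> hA hB; apply/psdE => v; rewrite bil_addA; apply: addr_ge0; [exact: hA|exact: hB]. Qed.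
Lemma psdZ d (A : 'M[C]_d) c : 0 <= c -> psdmx A -> psdmx (c *: A).
Proof. by move=> hc hA; apply/psdE => v; rewrite bil_scaleA; apply: mulr_ge0 => //; exact: hA. Qed.
Lemma psd_diag d (A : 'M[C]_d) i : psdmx A -> 0 <= A i i.
Proof. by move=> hA; have := hA (delta_mx i 0); rewrite -/(bil _ _ _) bil_delta. Qed.
Lemma psd_tr d (A : 'M[C]_d) : psdmx A -> 0 <= \tr A.
Proof. by move=> hA; rewrite /mxtrace sumr_ge0 // => i _; apply: psd_diag. Qed.
Lemma psd1 d : psdmx (1%:M : 'M[C]_d).
Proof.
apply/psdE => v; rewrite /bil mulmx1 mxE sumr_ge0 // => i _.
by rewrite adjmxE mul_cj_ge0.
Qed.
Lemma psd0 d : psdmx (0 : 'M[C]_d).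
Proof. by apply/psdE => v; rewrite /bil mulmx0 mul0mx mxE. Qed.

Lemma adjmx_col p q (A : 'M[C]_(p,q)) j : adjmx (col j A) = row j (adjmx A).
Proof. by apply/matrixP => a b; rewrite !mxE. Qed.

Definition hproj d (Q : 'M[C]_d) := adjmx Q = Q /\ Q *m Q = Q.

Lemma tr_projE d (Q X : 'M[C]_d) : hproj Q ->
  \tr (Q *m X) = \sum_i bil X (col i Q) (col i Q).
Proof.
move=> [hQ1 hQ2].
rewrite -{1}hQ2 -mulmxA mxtrace_mulC /mxtrace; apply: eq_bigr => i _.
rewrite /bil adjmx_col hQ1.
rewrite [LHS]mxE [RHS]mxE; apply: eq_bigr => k _; by rewrite -row_mul !mxE.
Qed.

Lemma tr_proj_ge0 d (Q X : 'M[C]_d) : hproj Q -> psdmx X -> 0 <= \tr (Q *m X).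
Proof. by move=> hQ hX; rewrite tr_projE // sumr_ge0 // => i _; apply: hX. Qed.

Lemma tr_proj_eq0 d (Q X : 'M[C]_d) : hproj Q -> psdmx X -> \tr (Q *m X) = 0 -> X *m Q = 0.
Proof.
move=> hQ hX; rewrite tr_projE // => /eqP; rewrite psumr_eq0 /=; last by move=> i _; apply: hX.
move=> /allP H; apply/matrixP => a b.
have /eqP h := H b (mem_index_enum _).
have := psd_zero hX h => /matrixP /(_ a 0) e.
transitivity ((X *m col b Q) a 0); last by rewrite e !mxE.
by rewrite !mxE; apply: eq_bigr => k _; rewrite mxE.
Qed.

Lemma hproj_compl d (Q : 'M[C]_d) : hproj Q -> hproj (1%:M - Q).
Proof.
move=> [h1 h2]; split; first by rewrite adjmxB adjmx1 h1.
rewrite mulmxBl !mulmxBr !mul1mx mulmx1 h2 subrr subr0 //.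
Qed.

Lemma tr_proj_le d (Q X : 'M[C]_d) : hproj Q -> psdmx X -> \tr (Q *m X) <= \tr X.
Proof.
move=> hQ hX; rewrite -subr_ge0.
have := tr_proj_ge0 (hproj_compl hQ) hX.
by rewrite mulmxBl mul1mx raddfB.
Qed.


Lemma sum_tens a b (F : 'I_(a * b) -> C) :
  \sum_k F k = \sum_i \sum_j F (mxtens_index (i, j)).
Proof.
rewrite (pair_big xpredT xpredT (fun i j => F (mxtens_index (i, j)))) /=.
rewrite (reindex (@mxtens_index a b)) /=; first by apply: eq_bigr => -[i j].
by exists (@mxtens_unindex a b) => x _; rewrite (mxtens_indexK, mxtens_unindexK).
Qed.

Lemma tr_ptrace a b (U : 'M[C]_(a * b)) : \tr (ptraceA U) = \tr U.
Proof.
rewrite /mxtrace sum_tens exchange_big /=; apply: eq_bigr => j _; by rewrite mxE.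
Qed.

Lemma tr_tens a b (A : 'M[C]_a) (B : 'M[C]_b) : \tr (A *t B) = \tr A * \tr B.
Proof.
rewrite /mxtrace sum_tens mulr_suml; apply: eq_bigr => i _; rewrite mulr_sumr.
by apply: eq_bigr => j _; rewrite tensmxE.
Qed.

Lemma ptraceAD a b (U V : 'M[C]_(a * b)) : ptraceA (U + V) = ptraceA U + ptraceA V.
Proof. by apply/matrixP => i j; rewrite !mxE -big_split; apply: eq_bigr => k _; rewrite mxE. Qed.
Lemma ptraceAZ a b c (U : 'M[C]_(a * b)) : ptraceA (c *: U) = c *: ptraceA U.
Proof. by apply/matrixP => i j; rewrite !mxE mulr_sumr; apply: eq_bigr => k _; rewrite mxE. Qed.
Lemma ptrace_tens1 a b (S : 'M[C]_a) : ptraceA (S *t (1%:M : 'M[C]_b)) = (\tr S)%:M.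
Proof.
apply/matrixP => i j; rewrite !mxE -mulr_natr /mxtrace mulr_suml; apply: eq_bigr => k _.
by rewrite tensmxE !mxE.
Qed.

Lemma tensmxZl a b c d (k : C) (A : 'M[C]_(a,b)) (B : 'M[C]_(c,d)) : (k *: A) *t B = k *: (A *t B).
Proof. by apply/matrixP => i j; rewrite !mxE mulrA. Qed.
Lemma tensmxDl a b c d (A A' : 'M[C]_(a,b)) (B : 'M[C]_(c,d)) : (A + A') *t B = A *t B + A' *t B.
Proof. by apply/matrixP => i j; rewrite !mxE mulrDl. Qed.
Lemma tensmxNl a b c d (A : 'M[C]_(a,b)) (B : 'M[C]_(c,d)) : (- A) *t B = - (A *t B).
Proof. by apply/matrixP => i j; rewrite !mxE mulNr. Qed.

Lemma tens11 a b : (1%:M : 'M[C]_a) *t (1%:M : 'M[C]_b) = 1%:M.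
Proof.
apply/matrixP => i j.
case: (mxtens_indexP i) => i1 i2; case: (mxtens_indexP j) => j1 j2.
rewrite tensmxE !mxE (can_eq (@mxtens_indexK _ _)) xpair_eqE.
by case: (i1 == j1); case: (i2 == j2); rewrite /= ?mulr1 ?mulr0 ?mul0r.
Qed.

Lemma entry11_tens (M N : 'M[C]_1) k l : (M *t N) k l = M 0 0 * N 0 0.
Proof.
rewrite mxE; case: (mxtens_unindex k) => a1 a2; case: (mxtens_unindex l) => b1 b2.
by rewrite [a1]ord1 [a2]ord1 [b1]ord1 [b2]ord1.
Qed.

Lemma bil_tens a b (A : 'M[C]_a) (B : 'M[C]_b) (u : 'cV[C]_a) (w : 'cV[C]_b) :
  (adjmx (u *t w) *m (A *t B) *m (u *t w)) 0 0 = bil A u u * bil B w w.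
Proof. by rewrite adjmx_tens !tensmx_mul entry11_tens. Qed.

Lemma psd_tens1 a b (S : 'M[C]_a) : (0 < b)%N -> psdmx (S *t (1%:M : 'M[C]_b)) -> psdmx S.
Proof.
move=> b0 H; apply/psdE => v.
have := H (v *t (delta_mx (Ordinal b0) 0 : 'cV[C]_b)).
rewrite bil_tens (_ : bil (1%:M : 'M[C]_b) _ _ = 1) ?mulr1 //.
by rewrite /bil mulmx1 adjmx_delta -rowE !mxE !eqxx.
Qed.


Lemma sum_pick p (a : 'I_p) (F : 'I_p -> C) : \sum_i (a == i)%:R * F i = F a.
Proof.
rewrite (bigD1 a) //= eqxx mul1r big1 ?addr0 // => i /negbTE.
by rewrite eq_sym => ->; rewrite mul0r.
Qed.

Lemma mul_delta_entry p q s (A : 'M[C]_(p,q)) (a : 'I_q) (a' : 'I_s) b l :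
  (A *m delta_mx a a') b l = A b a * (l == a')%:R.
Proof.
rewrite mxE (bigD1 a) //= big1 ?addr0; first by rewrite mxE eqxx.
by move=> i /negbTE hi; rewrite mxE hi mulr0.
Qed.

Lemma kraus_entry n m r (E : 'I_r -> 'M[C]_(m, n)) a a' b b' :
  kraus_map E (delta_mx a a') b b' = \sum_k E k b a * cj (E k b' a').
Proof.
rewrite /kraus_map summxE; apply: eq_bigr => k _.
rewrite mxE; under eq_bigr => l _ do rewrite mul_delta_entry -mulrA mulrCA eq_sym.
by rewrite sum_pick adjmxE.
Qed.

Lemma choiE n m r (E : 'I_r -> 'M[C]_(m, n)) a b a' b' :
  choi E (mxtens_index (a, b)) (mxtens_index (a', b')) = \sum_k E k b a * cj (E k b' a').
Proof.
rewrite /choi summxE.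
under eq_bigr => i _ do (rewrite summxE; under eq_bigr => j _ do rewrite tensmxE mxE -mulnb natrM -mulrA).
under eq_bigr => i _ do rewrite -mulr_sumr.
by rewrite sum_pick sum_pick kraus_entry.
Qed.


Definition kvec n m r (E : 'I_r -> 'M[C]_(m, n)) k : 'cV[C]_(n * m) :=
  \col_x (E k (mxtens_unindex x).2 (mxtens_unindex x).1).

Lemma choi_sum n m r (E : 'I_r -> 'M[C]_(m, n)) :
  choi E = \sum_k kvec E k *m adjmx (kvec E k).
Proof.
apply/matrixP => x y; case: (mxtens_indexP x) => a b; case: (mxtens_indexP y) => a' b'.
rewrite choiE summxE; apply: eq_bigr => k _.
by rewrite mxE big_ord1 adjmxE !mxE !mxtens_indexK.
Qed.

Lemma channel_entry n m r (E : 'I_r -> 'M[C]_(m, n)) a a' : is_channel E ->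
  \sum_k \sum_b cj (E k b a) * E k b a' = (a == a')%:R.
Proof.
rewrite /is_channel => hE; have := congr1 (fun M : 'M[C]_n => M a a') hE; rewrite /= summxE mxE => <-.
by apply: eq_bigr => k _; rewrite mxE; apply: eq_bigr => b _; rewrite adjmxE.
Qed.

Lemma tr_tens1_choi n m r (E : 'I_r -> 'M[C]_(m, n)) (S : 'M[C]_n) : is_channel E ->
  \tr ((S *t (1%:M : 'M[C]_m)) *m choi E) = \tr S.
Proof.
move=> hE.
rewrite /mxtrace sum_tens.
transitivity (\sum_a \sum_a' S a a' * (\sum_k \sum_b cj (E k b a) * E k b a')).
  apply: eq_bigr => a _.
  transitivity (\sum_b \sum_a' \sum_b' S a a' * ((b == b')%:R * \sum_k E k b' a' * cj (E k b a))).
    apply: eq_bigr => b _; rewrite mxE sum_tens; apply: eq_bigr => a' _; apply: eq_bigr => b' _.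
    by rewrite tensmxE choiE mxE mulrA.
  rewrite exchange_big /=; apply: eq_bigr => a' _.
  transitivity (\sum_b S a a' * \sum_k E k b a' * cj (E k b a)).
    apply: eq_bigr => b _; under eq_bigr => b' _ do rewrite mulrCA.
    by rewrite sum_pick.
  rewrite -mulr_sumr exchange_big /=; congr (_ * _); apply: eq_bigr => k _.
  by apply: eq_bigr => b _; rewrite mulrC.
apply: eq_bigr => a _; under eq_bigr => a' _ do rewrite channel_entry // mulrC.
by rewrite sum_pick.
Qed.


Lemma bilNl d (A : 'M[C]_d) u v : bil A (- u) v = - bil A u v.
Proof. by rewrite -scaleN1r bilZl cjN cj1 mulN1r. Qed.
Lemma bilNr d (A : 'M[C]_d) u v : bil A u (- v) = - bil A u v.
Proof. by rewrite -scaleN1r bilZr mulN1r. Qed.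
Lemma bil00 d (A : 'M[C]_d) : bil A 0 0 = 0.
Proof. by rewrite -(scale0r (0 : 'cV[C]_d)) bilZl cj0 mul0r. Qed.

Lemma bil_le2 d (U : 'M[C]_d) a b : psdmx U ->
  bil U (a + b) (a + b) <= 2%:R * bil U a a + 2%:R * bil U b b.
Proof.
move=> hU; have h := hU (a - b); rewrite -/(bil _ _ _) in h.
rewrite -subr_ge0; apply: le_trans h _; rewrite le_eqVlt; apply/orP; left; apply/eqP.
rewrite !bilDl !bilDr !bilNl !bilNr; ring.
Qed.

Lemma qf_sum_le d (U : 'M[C]_d) I (s : seq I) (F : I -> 'cV[C]_d) : psdmx U ->
  bil U (\sum_(i <- s) F i) (\sum_(i <- s) F i) <= (2 ^ size s)%:R * \sum_(i <- s) bil U (F i) (F i).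
Proof.
move=> hU; elim: s => [|x s IH]; first by rewrite !big_nil bil00 mulr0.
rewrite !big_cons /=; apply: le_trans (bil_le2 _ _ hU) _.
rewrite expnS natrM -mulrA mulrDr [X in _ <= X]mulrDr; apply: lerD; last by rewrite ler_pM2l ?ltr0n //.
rewrite ler_pM2l ?ltr0n //; rewrite -[leLHS]mul1r; apply: ler_wpM2r; first exact: hU.
by rewrite ler1n expn_gt0.
Qed.

Lemma diag_le_tr d (U : 'M[C]_d) i : psdmx U -> U i i <= \tr U.
Proof.
move=> hU; rewrite /mxtrace (bigD1 i) //= lerDl sumr_ge0 // => j _; exact: psd_diag.
Qed.

Lemma col_decomp d (w : 'cV[C]_d) : w = \sum_i w i 0 *: delta_mx i 0.
Proof.
apply/matrixP => x y; rewrite summxE [y]ord1.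
under eq_bigr => i _ do rewrite !mxE eqxx andbT mulrC.
by rewrite sum_pick.
Qed.

Lemma qf_bound d (U : 'M[C]_d) (w : 'cV[C]_d) : psdmx U ->
  bil U w w <= ((2 ^ size (index_enum 'I_d))%:R * \sum_i cj (w i 0) * w i 0) * \tr U.
Proof.
move=> hU; rewrite {1 2}(col_decomp w); apply: le_trans (qf_sum_le _ _ hU) _.
rewrite -mulrA ler_pM2l ?ltr0n ?expn_gt0 // mulr_suml; apply: ler_sum => i _.
rewrite bilZl bilZr bil_delta mulrA; apply: ler_wpM2l; first exact: mul_cj_ge0.
exact: diag_le_tr.
Qed.

Lemma tr_choi_U n m r (E : 'I_r -> 'M[C]_(m, n)) (U : 'M[C]_(n * m)) :
  \tr (U *m choi E) = \sum_k bil U (kvec E k) (kvec E k).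
Proof.
rewrite choi_sum mulmx_sumr raddf_sum; apply: eq_bigr => k _.
change (\tr (U *m (kvec E k *m adjmx (kvec E k))) = bil U (kvec E k) (kvec E k)).
by rewrite mulmxA mxtrace_mulC /mxtrace big_ord1 mulmxA.
Qed.


Lemma supp_hproj d (J P : 'M[C]_d) : support_proj J P -> hproj P.
Proof. by case=> h1 h2 _; split. Qed.

Lemma supp_factor d (J P : 'M[C]_d) : support_proj J P -> exists D : 'M[C]_d, J = P *m D.
Proof.
case=> _ _ /andP[_ /submxP[D hD]]; exists D^T.
by rewrite -[J]trmxK hD trmx_mul trmxK.
Qed.

Lemma ups_bound n m r (E : 'I_r -> 'M[C]_(m, n)) (P : 'M[C]_(n * m)) :
  is_channel E -> support_proj (choi E) P ->
  exists B : R, forall x, Upsilon_values P x -> x <= B.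
Proof.
move=> hE hP.
pose c := \sum_k ((2 ^ size (index_enum 'I_(n * m)))%:R * \sum_i cj (kvec E k i 0) * kvec E k i 0).
have c0 : 0 <= c.
  apply: sumr_ge0 => k _; apply: mulr_ge0; first by rewrite ler0n.
  by apply: sumr_ge0 => i _; apply: mul_cj_ge0.
have cm0 : 0 <= c * m%:R by apply: mulr_ge0 => //; rewrite ler0n.
exists (complex.Re (c * m%:R)) => x [S [U [hU hSU htr hPX hS]]].
have hX : psdmx (S *t (1%:M : 'M[C]_m) - U) := hSU.
have XP := tr_proj_eq0 (supp_hproj hP) hX hPX.
have [D hD] := supp_factor hP.
have XJ : (S *t (1%:M : 'M[C]_m) - U) *m choi E = 0 by rewrite hD mulmxA XP mul0mx.
have e1 : x%:C = \tr (U *m choi E).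
  rewrite -hS -(tr_tens1_choi S hE).
  have -> : S *t (1%:M : 'M[C]_m) = U + (S *t (1%:M : 'M[C]_m) - U) by rewrite addrC subrK.
  by rewrite mulmxDl XJ addr0.
have e2 : \tr U = m%:R by rewrite -tr_ptrace htr mxtrace1.
rewrite -lecR e1 -(ge0_realC cm0) tr_choi_U -e2 /c mulr_suml.
apply: ler_sum => k _; exact: qf_bound.
Qed.


Lemma mxtraceN' d (A : 'M[C]_d) : \tr (- A) = - \tr A. Proof. exact: raddfN. Qed.
Lemma mxtraceB' d (A B : 'M[C]_d) : \tr (A - B) = \tr A - \tr B. Proof. exact: raddfB. Qed.

Lemma realC_le (x y : R) : (x%:C <= y%:C :> C) = (x <= y).
Proof. exact: lecR. Qed.

Lemma dns_le0 n m (P : 'M[C]_(n * m)) k x : hproj P -> DNS_values P k x -> x <= 0.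
Proof.
move=> hP [W [rho [hW hWr htr hpt hx]]].
have := tr_proj_ge0 hP hWr.
have -> : rho *t (1%:M : 'M[C]_m) - W = - (W - rho *t (1%:M : 'M[C]_m)) by rewrite opprB.
rewrite mulmxN mxtraceN' hx oppr_ge0 -(rmorph0 (real_complex R)) lecR //.
Qed.

Lemma ups1 n m (P : 'M[C]_(n * m)) : (0 < n)%N -> Upsilon_values P 1.
Proof.
move=> n0.
pose S : 'M[C]_n := (n%:R^-1 : R)%:C *: 1%:M.
exists S, (S *t (1%:M : 'M[C]_m)); split.
- by rewrite /S tensmxZl tens11; apply: psdZ; [rewrite lecR invr_ge0 ler0n | exact: psd1].
- by rewrite /lemx subrr; exact: psd0.
- rewrite ptrace_tens1 /S mxtraceZ mxtrace1.
  by rewrite -(rmorph_nat (real_complex R)) -rmorphM mulVf // pnatr_eq0 -lt0n.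
- by rewrite subrr mulmx0 mxtrace0.
- by rewrite /S mxtraceZ mxtrace1 -(rmorph_nat (real_complex R)) -rmorphM mulVf // pnatr_eq0 -lt0n.
Qed.

Lemma dns_approx n m (P : 'M[C]_(n * m)) (u s : R) : hproj P -> 0 < u ->
  Upsilon_values P s -> 0 < s -> s <= u ->
  exists y, [/\ 0 <= y, y <= m%:R & DNS_values P (Num.sqrt u) (- (s^-1 - u^-1) * y)].
Proof.
move=> hP u0 [S [U [hU hSU htr hPX hS]]] s0 su.
have hX : psdmx (S *t (1%:M : 'M[C]_m) - U) := hSU.
have trU : \tr U = m%:R by rewrite -tr_ptrace htr mxtrace1.
have hPU0 := tr_proj_ge0 hP hU.
have hPUm : \tr (P *m U) <= m%:R by rewrite -trU; exact: tr_proj_le.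
exists (complex.Re (\tr (P *m U))).
have eU := ge0_realC hPU0.
split.
- by rewrite -lecR -eU.
- by move: hPUm; rewrite {1}eU -(rmorph_nat (real_complex R) m) lecR.
pose a : C := (s^-1)%:C; pose b : C := (u^-1)%:C.
have ab : 0 <= a - b by rewrite subr_ge0 lecR lef_pV2 ?posrE.
have b0 : 0 <= b by rewrite lecR invr_ge0 ltW.
exists (b *: U), (a *: S); split.
- exact: psdZ.
- rewrite /lemx tensmxZl.
  have -> : a *: (S *t (1%:M : 'M[C]_m)) - b *: U = a *: (S *t (1%:M : 'M[C]_m) - U) + (a - b) *: U.
    by rewrite scalerBr scalerBl addrA subrK.
  by apply: psdD; apply: psdZ => //; rewrite lecR invr_ge0 ltW.
- by rewrite mxtraceZ hS -rmorphM mulVf // gt_eqF.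
- by rewrite ptraceAZ htr scalemx1 sqr_sqrtr // ltW.
- rewrite tensmxZl.
  have -> : b *: U - a *: (S *t (1%:M : 'M[C]_m)) = - (a *: (S *t (1%:M : 'M[C]_m) - U)) - (a - b) *: U.
    by apply/matrixP => i j; rewrite !mxE; ring.
  rewrite mulmxBr mulmxN mxtraceB' mxtraceN' -!scalemxAr !mxtraceZ hPX mulr0 oppr0 sub0r.
  by rewrite {1}eU rmorphM rmorphN rmorphB mulNr.
Qed.




Lemma ups_of_exact n m (P : 'M[C]_(n * m)) (k : R) W rho : 0 < k ->
  [/\ psdmx W, lemx W (rho *t (1%:M : 'M[C]_m)), \tr rho = 1,
     ptraceA W = (real_complex R (k ^- 2))%:M
   & \tr (P *m (W - rho *t (1%:M : 'M[C]_m))) = 0] -> Upsilon_values P (k ^+ 2).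
Proof.
move=> k0 [hW hWr htr hpt h0].
pose c : C := (k ^+ 2)%:C.
have c0 : 0 <= c by rewrite lecR sqr_ge0.
exists (c *: rho), (c *: W); split.
- exact: psdZ.
- by rewrite /lemx tensmxZl -scalerBr; apply: psdZ.
- by rewrite ptraceAZ hpt scale_scalar_mx -rmorphM mulfV ?rmorph1 // expf_neq0 // gt_eqF.
- by rewrite tensmxZl -scalerBr -scalemxAr mxtraceZ -opprB mulmxN mxtraceN' h0 oppr0 mulr0.
- by rewrite mxtraceZ htr mulr1.
Qed.

End Q.


Local Open Scope classical_set_scope.

Section Cpt.
Variable R : realType.
Local Notation C := R[i].

Lemma cont_sum M I (s : seq I) (g : I -> 'rV[R]_M -> R) :
  (forall i, continuous (g i)) -> continuous (fun x => \sum_(i <- s) g i x).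
Proof.
move=> hg; elim: s => [|a s IH].
  by under eq_fun => x do rewrite big_nil; exact: cst_continuous.
under eq_fun => x do rewrite big_cons.
by move=> x; apply: continuousD; [exact: hg | exact: IH].
Qed.

Lemma lin_cont M (f : 'rV[R]_M -> R) :
  (forall x y, f (x + y) = f x + f y) -> (forall a x, f (a *: x) = a * f x) -> continuous f.
Proof.
move=> fD fZ.
have f0 : f 0 = 0 by have := fZ 0 0; rewrite scale0r mul0r.
have fE : f = fun x => \sum_i x 0 i * f (delta_mx 0 i).
  apply: funext => x; rewrite {1}(row_sum_delta x).
  rewrite (big_morph f fD f0); apply: eq_bigr => i _; exact: fZ.
rewrite fE; apply: cont_sum => i x.
apply: continuousM; first exact: coord_continuous.
exact: cst_continuous.
Qed.


Lemma ReD (z w : C) : complex.Re (z + w) = complex.Re z + complex.Re w.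
Proof. by case: z => ? ?; case: w => ? ?. Qed.
Lemma ImD (z w : C) : complex.Im (z + w) = complex.Im z + complex.Im w.
Proof. by case: z => ? ?; case: w => ? ?. Qed.
Lemma ReZ (a : R) (z : C) : complex.Re (a%:C * z) = a * complex.Re z.
Proof. by case: z => zr zi; rewrite /= mul0r subr0. Qed.
Lemma ImZ (a : R) (z : C) : complex.Im (a%:C * z) = a * complex.Im z.
Proof. by case: z => zr zi; rewrite /= mul0r addr0. Qed.

Definition clin M (L : 'rV[R]_M -> C) :=
  (forall x y, L (x + y) = L x + L y) /\ (forall (a : R) x, L (a *: x) = a%:C * L x).

Lemma clin_Re M (L : 'rV[R]_M -> C) : clin L -> continuous (fun x => complex.Re (L x)).
Proof.
case=> hD hZ; apply: lin_cont => [x y|a x]; first by rewrite hD ReD.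
by rewrite hZ ReZ.
Qed.
Lemma clin_Im M (L : 'rV[R]_M -> C) : clin L -> continuous (fun x => complex.Im (L x)).
Proof.
case=> hD hZ; apply: lin_cont => [x y|a x]; first by rewrite hD ImD.
by rewrite hZ ImZ.
Qed.

Lemma closed_ge0c M (L : 'rV[R]_M -> C) : clin L -> closed [set x | 0 <= L x].
Proof.
move=> hL.
have -> : [set x | 0 <= L x] =
   (fun x => complex.Re (L x)) @^-1` [set y | 0 <= y] `&` (fun x => complex.Im (L x)) @^-1` [set y | y = 0].
  apply/seteqP; split => x /=; rewrite lecE /=.
    by move=> /andP[/eqP -> ->].
  by move=> [-> ->]; rewrite eqxx.
apply: closedI; apply: preimage_closed.
- by move=> y _; exact: clin_Re.
- exact: closed_ge.
- by move=> y _; exact: clin_Im.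
- exact: closed_eq.
Qed.

Lemma closed_eqc M (L : 'rV[R]_M -> C) c : clin L -> closed [set x | L x = c].
Proof.
move=> hL.
have -> : [set x | L x = c] =
   (fun x => complex.Re (L x)) @^-1` [set y | y = complex.Re c] `&` (fun x => complex.Im (L x)) @^-1` [set y | y = complex.Im c].
  apply/seteqP; split => x /=; first by move=> ->.
  by case: (L x) => a b; case: c => a' b' /= [-> ->].
apply: closedI; apply: preimage_closed.
- by move=> y _; exact: clin_Re.
- exact: closed_eq.
- by move=> y _; exact: clin_Im.
- exact: closed_eq.
Qed.

Lemma closed_forall (T : topologicalType) I (Q : I -> set T) : (forall i, closed (Q i)) -> closed [set x | forall i, Q i x].
Proof.
move=> h; have -> : [set x | forall i, Q i x] = \bigcap_(i in setT) Q i.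
  by apply/seteqP; split => x /= H i //; apply: H.
by apply: closed_bigI => i _; exact: h.
Qed.

Definition mlin M p q (G : 'rV[R]_M -> 'M[C]_(p,q)) :=
  (forall x y, G (x + y) = G x + G y) /\ (forall (a : R) x, G (a *: x) = a%:C *: G x).

Lemma clin_entry M p q (G : 'rV[R]_M -> 'M[C]_(p,q)) i j : mlin G -> clin (fun x => G x i j).
Proof. by case=> hD hZ; split => [x y|a x]; rewrite ?hD ?hZ mxE. Qed.
Lemma clin_tr M p (G : 'rV[R]_M -> 'M[C]_p) : mlin G -> clin (fun x => \tr (G x)).
Proof. by case=> hD hZ; split => [x y|a x]; rewrite ?hD ?hZ ?mxtraceD ?mxtraceZ. Qed.
Lemma mlin_mull M p q s (A : 'M[C]_(s,p)) (G : 'rV[R]_M -> 'M[C]_(p,q)) : mlin G -> mlin (fun x => A *m G x).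
Proof. by case=> hD hZ; split => [x y|a x]; rewrite ?hD ?hZ ?mulmxDr // scalemxAr. Qed.
Lemma mlin_mulr M p q s (B : 'M[C]_(q,s)) (G : 'rV[R]_M -> 'M[C]_(p,q)) : mlin G -> mlin (fun x => G x *m B).
Proof. by case=> hD hZ; split => [x y|a x]; rewrite ?hD ?hZ ?mulmxDl // scalemxAl. Qed.
Lemma mlin_sub M p q (G1 G2 : 'rV[R]_M -> 'M[C]_(p,q)) : mlin G1 -> mlin G2 -> mlin (fun x => G1 x - G2 x).
Proof.
case=> hD1 hZ1 [hD2 hZ2]; split => [x y|a x]; first by rewrite hD1 hD2 opprD addrACA.
by rewrite hZ1 hZ2 scalerBr.
Qed.
Lemma mlin_tensr M p q s t (B : 'M[C]_(s,t)) (G : 'rV[R]_M -> 'M[C]_(p,q)) : mlin G -> mlin (fun x => G x *t B).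
Proof. by case=> hD hZ; split => [x y|a x]; rewrite ?hD ?hZ ?tensmxDl ?tensmxZl. Qed.
Lemma mlin_ptrace M a b (G : 'rV[R]_M -> 'M[C]_(a * b)) : mlin G -> mlin (fun x => ptraceA (G x)).
Proof. by case=> hD hZ; split => [x y|c x]; rewrite ?hD ?hZ ?ptraceAD ?ptraceAZ. Qed.

End Cpt.

Section Dec.
Variable R : realType.
Local Notation C := R[i].
Variables (n m : nat).
Local Notation d := (n * m)%N.
Local Notation Nq := (d * d + n * n)%N.
Local Notation T := 'rV[R]_(Nq + Nq).

Lemma split_lshift a b (i : 'I_a) : split (lshift b i) = inl i.
Proof. exact: (unsplitK (inl i)). Qed.
Lemma split_rshift a b (i : 'I_b) : split (rshift a i) = inr i.
Proof. exact: (unsplitK (inr i)). Qed.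

Definition ent (x : T) (q : 'I_Nq) : C := Complex (x 0 (lshift Nq q)) (x 0 (rshift Nq q)).
Definition decW (x : T) : 'M[C]_d := \matrix_(i, j) ent x (lshift (n * n) (mxtens_index (i, j))).
Definition decR (x : T) : 'M[C]_n := \matrix_(i, j) ent x (rshift (d * d) (mxtens_index (i, j))).

Lemma ent_add x y q : ent (x + y) q = ent x q + ent y q.
Proof. by rewrite /ent !mxE. Qed.
Lemma ent_scale (a : R) x q : ent (a *: x) q = a%:C * ent x q.
Proof.
rewrite /ent !mxE; apply/eqP; rewrite eq_complex /=.
by rewrite !mul0r subr0 addr0 !eqxx.
Qed.

Lemma mlin_decW : mlin decW.
Proof.
split => [x y|a x]; apply/matrixP => i j; rewrite !mxE ?ent_add //.
by rewrite ent_scale.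
Qed.
Lemma mlin_decR : mlin decR.
Proof.
split => [x y|a x]; apply/matrixP => i j; rewrite !mxE ?ent_add //.
by rewrite ent_scale.
Qed.

Definition entv (W : 'M[C]_d) (rho : 'M[C]_n) (q : 'I_Nq) : C :=
  match split q with
  | inl p => W (mxtens_unindex p).1 (mxtens_unindex p).2
  | inr p => rho (mxtens_unindex p).1 (mxtens_unindex p).2 end.
Definition enc W rho : T := \row_q match split q with
  | inl q1 => complex.Re (entv W rho q1) | inr q1 => complex.Im (entv W rho q1) end.

Lemma decW_enc W rho : decW (enc W rho) = W.
Proof.
apply/matrixP => i j; rewrite !mxE /ent !mxE split_lshift split_rshift /entv split_lshift.
by rewrite mxtens_indexK /=; case: (W i j).
Qed.
Lemma decR_enc W rho : decR (enc W rho) = rho.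
Proof.
apply/matrixP => i j; rewrite !mxE /ent !mxE split_lshift split_rshift /entv split_rshift.
by rewrite mxtens_indexK /=; case: (rho i j).
Qed.

Lemma coord_cases (x : T) (q : 'I_(Nq + Nq)) :
  (exists i j, x 0 q = complex.Re (decW x i j) \/ x 0 q = complex.Im (decW x i j)) \/
  (exists i j, x 0 q = complex.Re (decR x i j) \/ x 0 q = complex.Im (decR x i j)).
Proof.
have H : forall (q : 'I_(Nq + Nq)) (q1 : 'I_Nq), x 0 q = complex.Re (ent x q1) \/ x 0 q = complex.Im (ent x q1) ->
  (exists i j, x 0 q = complex.Re (decW x i j) \/ x 0 q = complex.Im (decW x i j)) \/
  (exists i j, x 0 q = complex.Re (decR x i j) \/ x 0 q = complex.Im (decR x i j)).
  move=> {}q q1 h; case: (split_ordP q1) => p ->{q1} in h.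
    left; case: (mxtens_indexP p) => i j in h *; exists i, j; by rewrite !mxE.
  right; case: (mxtens_indexP p) => i j in h *; exists i, j; by rewrite !mxE.
by case: (split_ordP q) => q1 ->; apply: (H _ q1); [left | right].
Qed.

End Dec.

Section Bound.
Variable R : realType.
Local Notation C := R[i].

Lemma bil_two d (Y : 'M[C]_d) i j (c : C) :
  bil Y (delta_mx i 0 + c *: delta_mx j 0) (delta_mx i 0 + c *: delta_mx j 0) =
  Y i i + c * Y i j + cj c * Y j i + cj c * c * Y j j.
Proof. by rewrite !bilDl !bilDr !bilZl !bilZr !bil_delta; ring. Qed.

Lemma psd_entry_bound d (Y : 'M[C]_d) (t : R) i j : psdmx Y -> \tr Y = t%:C ->
  `|complex.Re (Y i j)| <= t /\ `|complex.Im (Y i j)| <= t.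
Proof.
move=> hY htr.
have hii := psd_diag i hY; have hjj := psd_diag j hY.
have lei := diag_le_tr i hY; have lej := diag_le_tr j hY.
rewrite htr in lei lej.
have h1 := hY (delta_mx i 0 + (Complex 1 0) *: delta_mx j 0).
rewrite -/(bil _ _ _) bil_two /cj in h1.
have h2 := hY (delta_mx i 0 + (Complex (-1) 0) *: delta_mx j 0).
rewrite -/(bil _ _ _) bil_two /cj in h2.
have h3 := hY (delta_mx i 0 + (Complex 0 1) *: delta_mx j 0).
rewrite -/(bil _ _ _) bil_two /cj in h3.
have h4 := hY (delta_mx i 0 + (Complex 0 (-1)) *: delta_mx j 0).
rewrite -/(bil _ _ _) bil_two /cj in h4.
move: hii hjj lei lej h1 h2 h3 h4.
case: (Y i i) => a a'; case: (Y j j) => b b'; case: (Y i j) => p q; case: (Y j i) => r s.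
rewrite !lecE /=.
move=> /andP[/eqP e1 i1] /andP[/eqP e2 i2] /andP[/eqP e3 i3] /andP[/eqP e4 i4].
move=> /andP[/eqP e5 i5] /andP[/eqP e6 i6] /andP[/eqP e7 i7] /andP[/eqP e8 i8].
rewrite !ler_norml; split; apply/andP; split; lra.
Qed.

End Bound.

Section Main.
Variable R : realType.
Local Notation C := R[i].

Lemma closed_forall2 (T : topologicalType) I J (Q : I -> J -> set T) :
  (forall i j, closed (Q i j)) -> closed [set x | forall i j, Q i j x].
Proof.
move=> h; have -> : [set x | forall i j, Q i j x] = [set x | forall i, [set y | forall j, Q i j y] x] by [].
by apply: closed_forall => i; apply: closed_forall => j; exact: h.
Qed.

Lemma exact_of_sup2 n m (P : 'M[C]_(n * m)) (k : R) : (0 < m)%N -> hproj P -> 0 < k ->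
  DNS P k = 0%:E ->
  exists W rho, [/\ psdmx W, lemx W (rho *t (1%:M : 'M[C]_m)), \tr rho = 1,
     ptraceA W = (real_complex R (k ^- 2))%:M
   & \tr (P *m (W - rho *t (1%:M : 'M[C]_m))) = 0].
Proof.
move=> m0 hP k0 hD.
pose c : C := (k ^- 2)%:C.
pose feas (W : 'M[C]_(n * m)) (rho : 'M[C]_n) :=
  [/\ psdmx W, psdmx (rho *t (1%:M : 'M[C]_m) - W), \tr rho = 1 & ptraceA W = c%:M].
pose A := [set x : 'rV[R]_((n * m) * (n * m) + n * n + ((n * m) * (n * m) + n * n)) |
   feas (decW x) (decR x)].
pose f := fun x : 'rV[R]_((n * m) * (n * m) + n * n + ((n * m) * (n * m) + n * n)) =>
   complex.Re (\tr (P *m (decR x *t (1%:M : 'M[C]_m) - decW x))).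
have Acl : closed A.
  have -> : A = [set x | forall v : 'cV[C]_(n * m), 0 <= (adjmx v *m decW x *m v) 0 0]
     `&` [set x | forall v : 'cV[C]_(n * m), 0 <= (adjmx v *m (decR x *t (1%:M : 'M[C]_m) - decW x) *m v) 0 0]
     `&` [set x | \tr (decR x) = 1] `&` [set x | forall i j : 'I_m, ptraceA (decW x) i j = c%:M i j].
    apply/seteqP; split => x /=.
      by case => h1 h2 h3 h4; split; [split; [split|]|] => // i j; rewrite h4.
    by move=> [[[h1 h2] h3] h4]; split => //; apply/matrixP => i j; exact: h4.
  apply: closedI; first apply: closedI; first apply: closedI.
  - apply: closed_forall => v; apply: closed_ge0c; apply: clin_entry.
    exact: mlin_mulr (mlin_mull _ (@mlin_decW _ n m)).
  - apply: closed_forall => v; apply: closed_ge0c; apply: clin_entry.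
    apply: mlin_mulr; apply: mlin_mull; apply: mlin_sub; last exact: mlin_decW.
    exact: mlin_tensr (@mlin_decR _ n m).
  - by apply: closed_eqc; apply: clin_tr; exact: mlin_decR.
  - apply: closed_forall2 => i j; apply: closed_eqc; apply: clin_entry.
    exact: mlin_ptrace (@mlin_decW _ n m).
pose Mb : R := k ^- 2 * m%:R + 1.
have Mb1 : k ^- 2 * m%:R <= Mb by rewrite /Mb lerDl ler01.
have Mb2 : 1 <= Mb by rewrite /Mb lerDr mulr_ge0 // ?ler0n // invr_ge0 exprn_ge0 // ltW.
have Abox : A `<=` [set v | forall i, v ord0 i \in `[(- Mb), Mb]%R].
  move=> x [hW hX htr hpt] q.
  have trW : \tr (decW x) = (k ^- 2 * m%:R)%:C.
    by rewrite -tr_ptrace hpt mxtrace_scalar rmorphM rmorph_nat mulr_natr.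
  have hR : psdmx (decR x).
    apply: (psd_tens1 m0).
    rewrite (_ : decR x *t (1%:M : 'M[C]_m) = (decR x *t (1%:M : 'M[C]_m) - decW x) + decW x); last by rewrite subrK.
    exact: psdD.
  have trR : \tr (decR x) = 1%:C by rewrite htr.
  rewrite in_itv /= -ler_norml.
  case: (coord_cases x q) => [[i [j [->| ->]]] | [i [j [->| ->]]]].
  - by apply: le_trans Mb1; have [] := psd_entry_bound i j hW trW.
  - by apply: le_trans Mb1; have [] := psd_entry_bound i j hW trW.
  - by apply: le_trans Mb2; have [] := psd_entry_bound i j hR trR.
  - by apply: le_trans Mb2; have [] := psd_entry_bound i j hR trR.
have boxc : compact [set v : 'rV[R]_((n * m) * (n * m) + n * n + ((n * m) * (n * m) + n * n)) |
    forall i, v ord0 i \in `[(- Mb), Mb]%R].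
  apply: (@rV_compact _ _ (fun=> `[(- Mb), Mb]%classic)).
  by move=> _; apply: segment_compact.
have Acpt : compact A := subclosed_compact Acl boxc Abox.
have approx : forall e : R, 0 < e -> exists2 t, A t & f t < e.
  move=> e e0.
  have : ((- e)%:E < DNS P k)%E by rewrite hD lte_fin oppr_lt0.
  move=> /ereal_sup_gt [_ [x hx <-]]; rewrite lte_fin => hex.
  case: hx => W [rho [hW hWr htr hpt hx]].
  exists (enc W rho); first by rewrite /A /= /feas decW_enc decR_enc.
  rewrite /f decW_enc decR_enc -opprB mulmxN mxtraceN' hx /=; lra.
have A0 : A !=set0 by have [t At _] := approx 1 ltr01; exists t.
have fcont : continuous f.
  apply: clin_Re; apply: clin_tr; apply: mlin_mull; apply: mlin_sub; last exact: mlin_decW.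
  exact: mlin_tensr (@mlin_decR _ n m).
have fcA : {within A, continuous f} by apply: continuous_subspaceT.
have [c0 c0A hmin] := compact_EVT_min A0 Acpt fcA.
have c0A' : A c0 by rewrite inE in c0A.
case: c0A' => hW hX htr hpt.
exists (decW c0), (decR c0); split => //.
have hge := tr_proj_ge0 hP hX.
have fle : f c0 <= 0.
  rewrite leNgt; apply/negP => fpos.
  have [t At ft] := approx _ fpos.
  by have := hmin t (mem_set At); rewrite leNgt ft.
have e0 : \tr (P *m (decR c0 *t (1%:M : 'M[C]_m) - decW c0)) = 0.
  rewrite (ge0_realC hge).
  have -> : complex.Re (\tr (P *m (decR c0 *t (1%:M : 'M[C]_m) - decW c0))) = 0.
    apply/eqP; rewrite eq_le fle /=; move: hge; rewrite lecE => /andP[_ ->] //.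
  by [].
by rewrite -opprB mulmxN mxtraceN' e0 oppr0.
Qed.

End Main.

Close Scope classical_set_scope.
Close Scope complex_scope.

Theorem theorem2 (R : realType) (n m r : nat) (E : 'I_r -> 'M[R[i]]_(m, n))
    (P : 'M[R[i]]_(n * m)) :
  (0 < n)%N -> (0 < m)%N ->
  is_channel E -> support_proj (choi E) P ->
  exists u : R,
    [/\ Upsilon P = u%:E,
        (* sqrt Upsilon is the maximum of { k > 0 : D^NS(K,k) = 0 } *)
        0 < Num.sqrt u /\ DNS P (Num.sqrt u) = (0%:E),
        (forall k : R, 0 < k -> DNS P k = (0%:E) -> k <= Num.sqrt u),
        kappaNS P = (Num.sqrt u)%:E
      & oneshot_NS_Q P = Num.floor (Num.sqrt u)].
Proof.
move=> n0 m0 hE hJ.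
have hP := supp_hproj hJ.
have [B hB] := ups_bound hE hJ.
set V := Upsilon_values P.
have V1 : V 1 := ups1 P n0.
have hsup : has_sup V by split; [exists 1 | exists B => x /hB].
pose u := sup V.
have u1 : 1 <= u by apply: sup_upper_bound.
have u0 : 0 < u by apply: lt_le_trans u1; exact: ltr01.
have su0 : 0 < Num.sqrt u by rewrite sqrtr_gt0.
have bound : forall k : R, 0 < k -> DNS P k = 0%:E -> k <= Num.sqrt u.
  move=> k k0 hk.
  have [W [rho H]] := exact_of_sup2 m0 hP k0 hk.
  have Vk := ups_of_exact k0 H.
  have : k ^+ 2 <= u by apply: sup_upper_bound.
  by rewrite -{1}(sqr_sqrtr (ltW u0)) ler_pXn2r // ?nnegrE ?ltW // sqrtr_ge0.
have dns0 : DNS P (Num.sqrt u) = 0%:E.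
  apply/eqP; rewrite eq_le; apply/andP; split.
    by apply/ereal_supP => _ [x hx <-]; rewrite lee_fin; exact: dns_le0 hx.
  apply/lee_subgt0Pr => e e0; rewrite sub0e.
  have m0' : 0 < m%:R :> R by rewrite ltr0n.
  pose t := u^-1 + e / m%:R.
  have ut : u^-1 < t by rewrite /t ltrDl divr_gt0.
  have t0 : 0 < t by apply: lt_trans ut; rewrite invr_gt0.
  have tu : t^-1 < u by rewrite -[X in _ < X]invrK ltf_pV2 ?posrE ?invr_gt0.
  pose d := u - t^-1.
  have d0 : 0 < d by rewrite subr_gt0.
  have [s Vs hs] := sup_adherent d0 hsup.
  have su : s <= u by apply: sup_upper_bound.
  have hs' : t^-1 < s by move: hs; rewrite /d -/u => hs2; lra.
  have s0 : 0 < s by apply: lt_trans hs'; rewrite invr_gt0.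
  have st : s^-1 < t by rewrite -[X in _ < X]invrK ltf_pV2 ?posrE ?invr_gt0.
  have [y [y0 ym hy]] := dns_approx hP u0 Vs s0 su.
  apply: le_ereal_sup_tmp; exists (- (s^-1 - u^-1) * y)%:E; first by exists (- (s^-1 - u^-1) * y).
  rewrite lee_fin mulNr lerN2.
  have hsu : 0 <= s^-1 - u^-1 by rewrite subr_ge0 lef_pV2 ?posrE.
  apply: le_trans (ler_wpM2l hsu ym) _.
  rewrite -ler_pdivlMr //; rewrite /t in st; lra.
have hk : kappaNS P = (Num.sqrt u)%:E.
  apply/eqP; rewrite eq_le; apply/andP; split.
    by apply/ereal_supP => _ [k [k0 hk] <-]; rewrite lee_fin; exact: bound.
  by apply: ereal_sup_ubound; exists (Num.sqrt u).
exists u; split => //.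
- by rewrite /Upsilon ereal_sup_EFin //; [case: hsup | exists 1].
- by rewrite /oneshot_NS_Q hk.
Qed.
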